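(* Consider equation (E) and assume each $\tau_i$ is non-decreasing. Let $p>0$ be a constant with $p_i(t)\ge p$ for all $t\ge t_0$ and $i=1,\dots,m$. If $$p^{m}\limsup_{t\to+\infty}\prod_{i=1}^{m}\big(t-\tau_i(t)\big)>\frac{1}{m^{m}},$$ then all solutions of (E) oscillate.
   Context: Equation (E) is $x'(t)+\sum_{i=1}^{m}p_i(t)\,x(\tau_i(t))=0$, $t\ge t_0$, where $m\ge1$ is an integer and, for each $i$, $p_i,\tau_i:[t_0,\infty)\to[0,\infty)$ are continuous, $\tau_i(t)\le t$ for $t\ge t_0$, and $\lim_{t\to\infty}\tau_i(t)=\infty$. Let $\tau(t)=\min_i\tau_i(t)$ and $\tau_{(-1)}(t)=\sup\{s:\tau(s)\le t\}$. A solution of (E) is a function $x\in C([T_0,\infty);\mathbb{R})$ for some $T_0\ge t_0$ which is continuously differentiable on $[\tau_{(-1)}(T_0),\infty)$ and satisfies (E) for $t\ge\tau_{(-1)}(T_0)$. A solution is oscillatory if it has arbitrarily large zeros; ''all solutions oscillate'' means every solution is oscillatory. *)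

(* Defs.v *)
From Stdlib Require Export Reals Lra.
Open Scope R_scope.

(* Indices i = 1..m of the paper are encoded as i = 0..m-1 (nat). *)

Definition cont_on_from (a : R) (f : R -> R) : Prop :=
  forall t, a <= t -> forall eps, 0 < eps ->
    exists delta, 0 < delta /\
      forall s, a <= s -> Rabs (s - t) < delta -> Rabs (f s - f t) < eps.

Definition deriv_on_from (a : R) (f f' : R -> R) : Prop :=
  forall t, a <= t -> forall eps, 0 < eps ->
    exists delta, 0 < delta /\
      forall s, a <= s -> s <> t -> Rabs (s - t) < delta ->
        Rabs ((f s - f t) / (s - t) - f' t) < eps.

(* Sum_{i=1}^m g i, for m >= 1 (indices shifted to 0..m-1). *)
Definition sum_m (m : nat) (g : nat -> R) : R := sum_f_R0 g (pred m).
Definition prod_m (m : nat) (g : nat -> R) : R := prod_f_R0 g (pred m).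

Definition E_hyp (m : nat) (t0 : R) (p tau : nat -> R -> R) : Prop :=
  (1 <= m)%nat /\
  (forall i, (i < m)%nat ->
     cont_on_from t0 (p i) /\ cont_on_from t0 (tau i) /\
     (forall t, t0 <= t -> 0 <= p i t /\ 0 <= tau i t /\ tau i t <= t) /\
     (forall M, exists T, forall t, T <= t -> M <= tau i t)).

Fixpoint tau_min_aux (tau : nat -> R -> R) (k : nat) (t : R) : R :=
  match k with
  | O => tau O t
  | S k' => Rmin (tau_min_aux tau k' t) (tau k t)
  end.
Definition tau_min (m : nat) (tau : nat -> R -> R) (t : R) : R :=
  tau_min_aux tau (pred m) t.

(* T1 = tau_{(-1)}(T0) = sup { s >= t0 : tau(s) <= T0 } (domain of tau is [t0,oo)). *)
Definition tau_inv (m : nat) (t0 : R) (tau : nat -> R -> R) (T0 T1 : R) : Prop :=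
  is_lub (fun s => t0 <= s /\ tau_min m tau s <= T0) T1.

Definition is_solution (m : nat) (t0 : R) (p tau : nat -> R -> R)
    (T0 : R) (x : R -> R) : Prop :=
  t0 <= T0 /\ cont_on_from T0 x /\
  exists T1 x', tau_inv m t0 tau T0 T1 /\
    deriv_on_from T1 x x' /\ cont_on_from T1 x' /\
    forall t, T1 <= t ->
      x' t + sum_m m (fun i => p i t * x (tau i t)) = 0.

Definition oscillatory (x : R -> R) : Prop :=
  forall T, exists t, T <= t /\ x t = 0.

(* limsup_{t -> +oo} f t = L, with L : option R, None standing for +oo. *)
Definition limsup_infty (f : R -> R) (L : option R) : Prop :=
  match L with
  | Some l => forall eps, 0 < eps ->
      (exists T, forall t, T <= t -> f t < l + eps) /\
      (forall T, exists t, T <= t /\ l - eps < f t)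
  | None => forall M T, exists t, T <= t /\ M < f t
  end.

(* Main.v *)
Require Import Defs.
From Stdlib Require Import Reals Lra Lia Classical.
From mathcomp Require all_boot all_order all_algebra Rstruct.
Module AGM.
Import all_boot all_order all_algebra Rstruct.
Import Order.TTheory GRing.Theory Num.Theory.

Lemma prodE (y : nat -> R) n :
  prod_f_R0 y n = (\prod_(i < n.+1) y i)%R.
Proof.
elim: n => [|n IH]; first by rewrite big_ord_recr big_ord0 /= mul1r.
by rewrite /= IH [in RHS]big_ord_recr.
Qed.

Lemma sumE (y : nat -> R) n :
  sum_f_R0 y n = (\sum_(i < n.+1) y i)%R.
Proof.
elim: n => [|n IH]; first by rewrite big_ord_recr big_ord0 /= add0r.
by rewrite /= IH [in RHS]big_ord_recr.
Qed.

Lemma amgm (n : nat) (y : nat -> R) :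
  (forall i, (i <= n)%coq_nat -> Rle 0 (y i)) ->
  Rle (prod_f_R0 y n) (Rdiv (sum_f_R0 y n) (INR n.+1) ^ n.+1).
Proof.
move=> H.
have h := fun H0 => (@leif_AGM R 'I_n.+1 predT (fun i => y i) H0).1.
rewrite card_ord /= in h.
apply/RleP; rewrite prodE sumE RdivE INRE RpowE.
apply: h => i _; apply/RleP; apply: H; apply/ssrnat.leP; rewrite -ltnS; exact: ltn_ord.
Qed.
End AGM.
Open Scope R_scope.

Lemma eventually_all (m : nat) (tau : nat -> R -> R) :
  (forall i, (i < m)%nat -> forall M, exists T, forall t, T <= t -> M <= tau i t) ->
  forall M, exists T, forall i t, (i < m)%nat -> T <= t -> M <= tau i t.
Proof.
  induction m as [|m IH]; intros H M.
  - exists 0; intros; lia.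
  - destruct (IH (fun i Hi => H i (ltac:(lia))) M) as [T1 HT1].
    destruct (H m (ltac:(lia)) M) as [T2 HT2].
    exists (Rmax T1 T2); intros i t Hi Ht.
    destruct (Nat.eq_dec i m) as [->|Hne].
    + apply HT2. pose proof (Rmax_r T1 T2); lra.
    + apply HT1; [lia|]. pose proof (Rmax_l T1 T2); lra.
Qed.

Lemma deriv_pt (a : R) (f f' : R -> R) :
  deriv_on_from a f f' -> forall t, a < t -> derivable_pt_lim f t (f' t).
Proof.
  intros D t Ht eps Heps.
  destruct (D t (Rlt_le _ _ Ht) eps Heps) as [d [Hd Hs]].
  assert (Hpos : 0 < Rmin d (t - a)) by (apply Rmin_pos; lra).
  exists (mkposreal _ Hpos); intros h Hh0 Hh; simpl in Hh.
  pose proof (Rmin_l d (t - a)); pose proof (Rmin_r d (t - a)).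
  replace h with ((t + h) - t) at 2 by ring.
  apply Hs.
  - apply Rabs_def2 in Hh. lra.
  - lra.
  - replace (t + h - t) with h by ring. lra.
Qed.

Lemma sum_nonneg (f : nat -> R) N :
  (forall i, (i <= N)%nat -> 0 <= f i) -> 0 <= sum_f_R0 f N.
Proof.
  intros H. induction N as [|N IH]; simpl.
  - apply H; lia.
  - pose proof (H (S N) (le_n _)). assert (0 <= sum_f_R0 f N) by (apply IH; intros; apply H; lia). lra.
Qed.

Lemma sum_ge_first (f : nat -> R) N :
  (forall i, (i <= N)%nat -> 0 <= f i) -> f 0%nat <= sum_f_R0 f N.
Proof.
  intros H. induction N as [|N IH]; simpl.
  - lra.
  - pose proof (H (S N) (le_n _)). assert (f 0%nat <= sum_f_R0 f N) by (apply IH; intros; apply H; lia). lra.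
Qed.

Lemma sum_opp (f : nat -> R) N : sum_f_R0 (fun i => - f i) N = - sum_f_R0 f N.
Proof. induction N; simpl; [ring| rewrite IHN; ring]. Qed.

Lemma prod_scal (c : R) (f : nat -> R) N :
  prod_f_R0 (fun i => c * f i) N = c ^ (S N) * prod_f_R0 f N.
Proof. induction N; simpl; [ring| rewrite IHN; simpl; ring]. Qed.

Lemma tau_min_le (tau : nat -> R -> R) k s : tau_min_aux tau k s <= tau 0%nat s.
Proof.
  induction k; simpl; [lra|]. pose proof (Rmin_l (tau_min_aux tau k s) (tau (S k) s)); lra.
Qed.
Lemma core (m : nat) (t0 : R) (p tau : nat -> R -> R) (pc T1 A : R) (x x' : R -> R) :
  (1 <= m)%nat ->
  (forall i, (i < m)%nat -> forall t, t0 <= t -> tau i t <= t) ->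
  (forall i, (i < m)%nat -> forall M, exists T, forall t, T <= t -> M <= tau i t) ->
  (forall i, (i < m)%nat -> forall s t, t0 <= s -> s <= t -> tau i s <= tau i t) ->
  0 < pc ->
  (forall i, (i < m)%nat -> forall t, t0 <= t -> pc <= p i t) ->
  (forall T, exists t, T <= t /\ pc ^ m * prod_m m (fun i => t - tau i t) > 1 / INR m ^ m) ->
  t0 <= T1 -> T1 < A ->
  (forall t, T1 < t -> derivable_pt_lim x t (x' t)) ->
  (forall t, T1 < t -> x' t + sum_m m (fun i => p i t * x (tau i t)) = 0) ->
  (forall t, A <= t -> 0 < x t) -> False.
Proof.
  intros Hm Htau Hev Hmono Hpc Hp Hls Ht0 HA Dx Heq Hpos.
  pose proof (eventually_all m tau Hev) as Ev.
  destruct (Ev A) as [T2 HT2].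
  set (B := Rmax (Rmax T2 A) t0).
  assert (HB1 : T2 <= B) by (unfold B; pose proof (Rmax_l (Rmax T2 A) t0); pose proof (Rmax_l T2 A); lra).
  assert (HB2 : A <= B) by (unfold B; pose proof (Rmax_l (Rmax T2 A) t0); pose proof (Rmax_r T2 A); lra).
  assert (HB3 : t0 <= B) by (unfold B; pose proof (Rmax_r (Rmax T2 A) t0); lra).
  assert (Hneg : forall s, B <= s -> x' s <= 0).
  { intros s Hs. pose proof (Heq s ltac:(lra)) as E.
    assert (0 <= sum_m m (fun i => p i s * x (tau i s))).
    { unfold sum_m. apply sum_nonneg. intros i Hi.
      assert (Hi' : (i < m)%nat) by lia.
      pose proof (Hp i Hi' s ltac:(lra)).
      pose proof (Hpos (tau i s) (HT2 i s Hi' ltac:(lra))).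
      apply Rmult_le_pos; lra. }
    lra. }
  assert (Hdec : forall a b, B <= a -> a <= b -> x b <= x a).
  { intros a b Ha Hab. destruct (Req_dec a b) as [->|Hne]; [lra|].
    destruct (MVT_cor2 x x' a b ltac:(lra)) as [c [Hc1 Hc2]].
    { intros c Hc. apply Dx. lra. }
    pose proof (Hneg c ltac:(lra)). nra. }
  destruct (Ev B) as [T3 HT3].
  destruct (Ev (Rmax T3 B)) as [T4 HT4].
  destruct (Hls (Rmax T4 B)) as [t [Ht Hbig]].
  pose proof (Rmax_l T4 B) as M1; pose proof (Rmax_r T4 B) as M2;
  pose proof (Rmax_l T3 B) as M3; pose proof (Rmax_r T3 B) as M4.
  set (SS := sum_f_R0 (fun j => x (tau j t)) (pred m)).
  assert (HyPos : forall j, (j < m)%nat -> 0 < x (tau j t)).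
  { intros j Hj. apply Hpos. pose proof (HT4 j t Hj ltac:(lra)). lra. }
  assert (HS : 0 < SS).
  { unfold SS. eapply Rlt_le_trans; [apply (HyPos 0%nat); lia|].
    apply (sum_ge_first (fun j => x (tau j t))). intros; apply Rlt_le, HyPos; lia. }
  assert (Key : forall i, (i < m)%nat -> pc * SS * (t - tau i t) <= x (tau i t)).
  { intros i Hi.
    pose proof (HT4 i t Hi ltac:(lra)) as Hti.
    pose proof (Htau i Hi t ltac:(lra)) as Htit.
    pose proof (HyPos i Hi).
    destruct (Req_dec (tau i t) t) as [Heqt|Hne].
    { replace (t - tau i t) with 0 by lra. rewrite Rmult_0_r. lra. }
    destruct (MVT_cor2 x x' (tau i t) t ltac:(lra)) as [c [Hc1 Hc2]].
    { intros c Hc. apply Dx. lra. }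
    pose proof (Heq c ltac:(lra)) as Ec.
    assert (pc * SS <= sum_m m (fun j => p j c * x (tau j c))).
    { unfold sum_m, SS. rewrite scal_sum. apply sum_Rle. intros j Hj.
      assert (Hj' : (j < m)%nat) by lia.
      pose proof (Hp j Hj' c ltac:(lra)).
      pose proof (HyPos j Hj').
      pose proof (HT3 j c Hj' ltac:(lra)).
      pose proof (Hmono j Hj' c t ltac:(lra) ltac:(lra)).
      pose proof (Hdec (tau j c) (tau j t) ltac:(lra) ltac:(lra)).
      nra. }
    pose proof (Hpos t ltac:(lra)).
    assert (x' c <= - (pc * SS)) by lra.
    nra. }
  destruct m as [|N]; [lia|]. simpl pred in *.
  set (P := prod_f_R0 (fun i => t - tau i t) N).
  assert (K1 : (pc * SS) ^ S N * P <= prod_f_R0 (fun i => x (tau i t)) N).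
  { unfold P. rewrite <- prod_scal. apply prod_SO_Rle. intros n Hn.
    assert (Hn' : (n < S N)%nat) by lia.
    pose proof (Htau n Hn' t ltac:(lra)).
    split; [|apply Key; exact Hn'].
    apply Rmult_le_pos; [apply Rmult_le_pos|]; lra. }
  assert (K2 := AGM.amgm N (fun i => x (tau i t)) ltac:(intros i Hi; apply Rlt_le, HyPos; lia)).
  fold SS in K2.
  unfold prod_m in Hbig; simpl pred in Hbig. fold P in Hbig.
  rewrite Rpow_mult_distr in K1.
  unfold Rdiv in K2. rewrite Rpow_mult_distr in K2.
  assert (HSn : 0 < SS ^ S N) by (apply pow_lt; lra).
  assert (HmN : 0 < INR (S N) ^ S N) by (apply pow_lt; apply lt_0_INR; lia).
  rewrite pow_inv in K2.
  assert (K3 : pc ^ S N * P * SS ^ S N <= / INR (S N) ^ S N * SS ^ S N) by lra.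
  apply Rmult_le_reg_r in K3; [|lra].
  unfold Rdiv in Hbig. lra.
Qed.
Lemma sign_const (x x' : R -> R) (T1 A : R) :
  (forall t, T1 < t -> derivable_pt_lim x t (x' t)) -> T1 < A ->
  (forall t, A <= t -> x t <> 0) ->
  (forall t, A <= t -> 0 < x t) \/ (forall t, A <= t -> x t < 0).
Proof.
  intros Dx HA Hnz.
  assert (Hc : forall a, T1 < a -> continuity_pt x a).
  { intros a Ha. apply derivable_continuous_pt. exists (x' a). apply Dx; exact Ha. }
  pose proof (Hnz A (Rle_refl _)) as HA0.
  destruct (Rlt_or_le 0 (x A)) as [Hp|Hn].
  - left. intros t Ht. destruct (Rlt_or_le 0 (x t)) as [|Hle]; [assumption|].
    exfalso. pose proof (Hnz t Ht).
    assert (A < t) by (destruct (Req_dec A t) as [<-|]; lra).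
    destruct (Ranalysis5.IVT_interv (fun s => - x s) A t) as [z [Hz1 Hz2]].
    + intros a Ha. apply (continuity_pt_opp x). apply Hc. lra.
    + assumption.
    + lra.
    + lra.
    + apply (Hnz z); lra.
  - right. assert (x A < 0) by lra.
    intros t Ht. destruct (Rlt_or_le (x t) 0) as [|Hle]; [assumption|].
    exfalso. pose proof (Hnz t Ht).
    assert (A < t) by (destruct (Req_dec A t) as [<-|]; lra).
    destruct (Ranalysis5.IVT_interv x A t) as [z [Hz1 Hz2]].
    + intros a Ha. apply Hc. lra.
    + assumption.
    + lra.
    + lra.
    + apply (Hnz z); lra.
Qed.

Theorem corollary3p5 (m : nat) (t0 : R) (p tau : nat -> R -> R) (pc : R) :
  E_hyp m t0 p tau ->
  (forall i, (i < m)%nat -> forall s t, t0 <= s -> s <= t -> tau i s <= tau i t) ->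
  0 < pc ->
  (forall i, (i < m)%nat -> forall t, t0 <= t -> pc <= p i t) ->
  (exists L, limsup_infty (fun t => prod_m m (fun i => t - tau i t)) L /\
     match L with
     | None => True
     | Some l => pc ^ m * l > 1 / (INR m ^ m)
     end) ->
  forall T0 x, is_solution m t0 p tau T0 x -> oscillatory x.
Proof.
  intros [Hm Hi] Hmono Hpc Hp [L [HL HLc]] T0 x [HT0 [_ [T1 [x' [Hlub [Hd [_ Heq]]]]]]].
  assert (Htau : forall i, (i < m)%nat -> forall t, t0 <= t -> tau i t <= t).
  { intros i Hi' t Ht. destruct (Hi i Hi') as [_ [_ [H3 _]]]. apply H3; exact Ht. }
  assert (Hev : forall i, (i < m)%nat -> forall M, exists T, forall t, T <= t -> M <= tau i t).
  { intros i Hi'. destruct (Hi i Hi') as [_ [_ [_ H4]]]. exact H4. }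
  assert (HT1 : T0 <= T1).
  { apply (proj1 Hlub). split; [exact HT0|].
    unfold tau_min. pose proof (tau_min_le tau (pred m) T0).
    pose proof (Htau 0%nat ltac:(lia) T0 HT0). lra. }
  assert (Hpm : 0 < pc ^ m) by (apply pow_lt; lra).
  assert (Hls : forall T, exists t, T <= t /\
            pc ^ m * prod_m m (fun i => t - tau i t) > 1 / INR m ^ m).
  { intros T. destruct L as [l|].
    - set (c := 1 / INR m ^ m) in *.
      set (eps := (l - c / pc ^ m) / 2).
      assert (Hc : c / pc ^ m < l).
      { apply (Rmult_lt_reg_l (pc ^ m)); [lra|]. field_simplify; lra. }
      assert (He : 0 < eps) by (unfold eps; lra).
      destruct (HL eps He) as [_ H2]. destruct (H2 T) as [t [Ht Hf]].
      exists t; split; [exact Ht|].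
      assert (c / pc ^ m < prod_m m (fun i => t - tau i t)) by (unfold eps in Hf; lra).
      apply (Rmult_lt_compat_l (pc ^ m)) in H; [|lra].
      unfold Rdiv in H. rewrite <- Rmult_assoc, (Rmult_comm (pc ^ m)), Rmult_assoc,
        Rinv_r, Rmult_1_r in H; lra.
    - set (c := 1 / INR m ^ m).
      destruct (HL (c / pc ^ m) T) as [t [Ht Hf]].
      exists t; split; [exact Ht|].
      apply (Rmult_lt_compat_l (pc ^ m)) in Hf; [|lra].
      unfold Rdiv in Hf. rewrite <- Rmult_assoc, (Rmult_comm (pc ^ m)), Rmult_assoc,
        Rinv_r, Rmult_1_r in Hf; fold c in Hf |- *; unfold c in *; lra. }
  intros T. apply NNPP; intro Hno.
  assert (Hnz : forall t, T <= t -> x t <> 0).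
  { intros t Ht Hx. apply Hno. exists t. split; assumption. }
  set (A := Rmax T (T1 + 1)).
  assert (HA1 : T <= A) by apply Rmax_l.
  assert (HA2 : T1 + 1 <= A) by apply Rmax_r.
  pose proof (deriv_pt T1 x x' Hd) as Dx.
  assert (Ht0 : t0 <= T1) by lra.
  destruct (sign_const x x' T1 A Dx ltac:(lra) ltac:(intros t Ht; apply Hnz; lra)) as [Hpos|Hneg].
  - apply (core m t0 p tau pc T1 A x x' Hm Htau Hev Hmono Hpc Hp Hls Ht0 ltac:(lra) Dx).
    + intros t Ht. apply Heq. lra.
    + exact Hpos.
  - apply (core m t0 p tau pc T1 A (fun s => - x s) (fun s => - x' s) Hm Htau Hev Hmono Hpc Hp Hls Ht0 ltac:(lra)).
    + intros t Ht. apply (derivable_pt_lim_opp x). apply Dx; exact Ht.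
    + intros t Ht. unfold sum_m.
      rewrite (sum_eq _ (fun i => - (p i t * x (tau i t)))) by (intros; ring).
      rewrite sum_opp. pose proof (Heq t ltac:(lra)) as E. unfold sum_m in E. lra.
    + intros t Ht. pose proof (Hneg t Ht). lra.
Qed.
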